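(* A gentle quiver $(\Delta,R)$ is of tree type (i.e. $|\Delta_0|=|\Delta_1|+1$) if and only if $f_{(\Delta,R)}=[p+2,\,p]$ for some $p\in\mathbb N$.
   Context: A quiver $\Delta$ has finite vertex set $\Delta_0$, arrow set $\Delta_1$, maps $s,t$. A path of length $n\ge1$ is $(\alpha_1,\dots,\alpha_n)$ with $s\alpha_i=t\alpha_{i+1}$. A gentle quiver is $(\Delta,R)$ with $\Delta$ connected, $R$ a set of paths of length 2, such that: (1) each vertex is start of at most two arrows and end of at most two arrows; (2) for each arrow $\alpha$ at most one $\beta$ with $s\beta=t\alpha$, $(\beta,\alpha)\notin R$ and at most one $\gamma$ with $t\gamma=s\alpha$, $(\alpha,\gamma)\notin R$; (3) for each $\alpha$ at most one $\beta$ with $(\beta,\alpha)\in R$ and at most one $\gamma$ with $(\alpha,\gamma)\in R$; (4) for some $n$ every path of length $n$ has a subpath in $R$. Invariant $f_{(\Delta,R)}:\mathbb N^2\to\mathbb N$: choose $\sigma,\tau:\Delta_1\to\{\pm1\}$ with distinct arrows of same start having opposite $\sigma$, distinct arrows of same end opposite $\tau$, and for $s\alpha=t\beta$: $(\alpha,\beta)\in R$ iff $\sigma\alpha=\tau\beta$; $\sigma\omega=\sigma\alpha_n,\tau\omega=\tau\alpha_1$. Permitted paths: no consecutive pair in $R$, plus trivial $1_{x,\varepsilon}$ ($s=t=x$, $\sigma=\varepsilon,\tau=-\varepsilon$); maximal if no arrow $\alpha$ with $s\alpha=t\omega,\sigma\alpha=-\tau\omega$ and no $\beta$ with $t\beta=s\omega,\tau\beta=-\sigma\omega$;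 set $\mathcal M$. Antipaths: all consecutive pairs in $R$, plus trivial $1'_{x,\varepsilon}$ ($\sigma=\tau=\varepsilon$); maximal if no $\alpha$ with $s\alpha=t\omega,\sigma\alpha=\tau\omega$ and no $\beta$ with $t\beta=s\omega,\tau\beta=\sigma\omega$; set $\mathcal N$. $\phi:\mathcal M\to\mathcal N$, $\omega\mapsto$ unique $\omega'$ with $t\omega'=t\omega,\tau\omega'=-\tau\omega$; $\psi:\mathcal N\to\mathcal M$, $\omega\mapsto$ unique $\omega'$ with $s\omega'=s\omega,\sigma\omega'=-\sigma\omega$; $\Phi=\phi\psi$; $\Phi$-orbit: $p=|\mathcal O|$, $q=$ total length. $\mathcal C$: arrows $\alpha$ with $(\alpha)$ not a subpath of a maximal antipath; $\Psi(\alpha)=$ unique $\beta\in\mathcal C$ with $t\beta=s\alpha,\tau\beta=\sigma\alpha$; $\Psi$-orbit: $p=0$, $q=|\mathcal O|$. $f(p,q)=$ number of orbits with these values. $[p,q]$ is the characteristic function of $\{(p,q)\}$. *)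

(* Defs.v *)
From HB Require Import structures.
From mathcomp Require Import all_boot.
From mathcomp Require Import finmap.
From mathcomp Require Import boolp classical_sets cardinality.

Set Implicit Arguments.
Unset Strict Implicit.
Unset Printing Implicit Defensive.

Section GentleQuiver.

(* R : rel A is the set of relations: R a b means the length-2 path (a,b)
   (with s a = t b, i.e. "first b then a") belongs to R. *)
Variables (V A : finType) (s t : A -> V) (R : rel A).

Definition adj : rel V :=
  fun u v => [exists a : A, ((s a == u) && (t a == v)) || ((s a == v) && (t a == u))].

Definition connected_quiver : Prop :=
  0 < #|V| /\ forall x y : V, connect adj x y.

(* A path of length n >= 1 is (a_1,...,a_n) with s a_i = t a_(i+1);
   it is encoded as a nonempty sequence a_1 :: [:: a_2; ...; a_n]. *)
Definition is_path (a : A) (l : seq A) : bool := path (fun x y => s x == t y) a l.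

Definition gentle : Prop :=
  connected_quiver /\
  [/\ (forall a b, R a b -> s a = t b),
      (forall x : V, #|[pred a | s a == x]| <= 2 /\ #|[pred a | t a == x]| <= 2),
      (forall al : A, #|[pred b | (s b == t al) && ~~ R b al]| <= 1 /\
                      #|[pred c | (t c == s al) && ~~ R al c]| <= 1),
      (forall al : A, #|[pred b | R b al]| <= 1 /\ #|[pred c | R al c]| <= 1)
    &
      (exists n, 0 < n /\ forall (a : A) (l : seq A), (size l).+1 = n ->
          is_path a l -> ~~ path (fun x y => ~~ R x y) a l)].

(* Signs +1 / -1 are encoded by true / false; -e is ~~ e. *)
Variables (sg tu : A -> bool).

Definition sign_convention : Prop :=
  [/\ (forall a b, a != b -> s a = s b -> sg a != sg b),
      (forall a b, a != b -> t a = t b -> tu a != tu b)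
    & (forall a b, s a = t b -> (R a b <-> sg a = tu b))].

(* Generalized paths: either a trivial path at a vertex x carrying its two
   signs (sigma, tau), or a path of length >= 1 given as (a_1, [a_2..a_n]).
   The trivial permitted path 1_{x,e} is inl (x, e, ~~ e);
   the trivial antipath 1'_{x,e} is inl (x, e, e). *)
Definition gpath := ((V * bool * bool) + (A * seq A))%type.

Definition gs (w : gpath) : V :=
  match w with inl (x, _, _) => x | inr (a, l) => s (last a l) end.
Definition gt (w : gpath) : V :=
  match w with inl (x, _, _) => x | inr (a, _) => t a end.
Definition gsg (w : gpath) : bool :=
  match w with inl (_, e, _) => e | inr (a, l) => sg (last a l) end.
Definition gtu (w : gpath) : bool :=
  match w with inl (_, _, e) => e | inr (a, _) => tu a end.
Definition glen (w : gpath) : nat :=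
  match w with inl _ => 0 | inr (_, l) => (size l).+1 end.
Definition garrows (w : gpath) : seq A :=
  match w with inl _ => [::] | inr (a, l) => a :: l end.

Definition permitted (w : gpath) : bool :=
  match w with
  | inl (_, e1, e2) => e2 == ~~ e1
  | inr (a, l) => path (fun x y => (s x == t y) && ~~ R x y) a l
  end.

Definition antipath (w : gpath) : bool :=
  match w with
  | inl (_, e1, e2) => e2 == e1
  | inr (a, l) => path (fun x y => (s x == t y) && R x y) a l
  end.

Definition max_permitted (w : gpath) : bool :=
  [&& permitted w,
      ~~ [exists al : A, (s al == gt w) && (sg al == ~~ gtu w)] &
      ~~ [exists be : A, (t be == gs w) && (tu be == ~~ gsg w)]].

Definition max_antipath (w : gpath) : bool :=
  [&& antipath w,
      ~~ [exists al : A, (s al == gt w) && (sg al == gtu w)] &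
      ~~ [exists be : A, (t be == gs w) && (tu be == gsg w)]].

Definition Mset : {fset gpath} := fset_set (fun w => max_permitted w : Prop).
Definition Nset : {fset gpath} := fset_set (fun w => max_antipath w : Prop).
Definition Mlist : seq gpath := enum_fset Mset.
Definition Nlist : seq gpath := enum_fset Nset.

(* phi : M -> N and psi : N -> M (the unique element with the property). *)
Definition phi (w : gpath) : gpath :=
  head w [seq w' <- Nlist | (gt w' == gt w) && (gtu w' == ~~ gtu w)].
Definition psi (w : gpath) : gpath :=
  head w [seq w' <- Mlist | (gs w' == gs w) && (gsg w' == ~~ gsg w)].
Definition Phi (w : gpath) : gpath := phi (psi w).

Definition inC (al : A) : bool := ~~ has (fun w => al \in garrows w) Nlist.
Definition Clist : seq A := [seq al <- enum A | inC al].
Definition Psi (al : A) : A :=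
  head al [seq be <- Clist | (t be == s al) && (tu be == sg al)].

End GentleQuiver.

(* Orbits of g : T -> T on the finite (duplicate-free) list l, each orbit
   represented canonically as the sub-list of l it consists of. *)
Definition orbit_in (T : eqType) (l : seq T) (g : T -> T) (x : T) : seq T :=
  [seq y <- l | y \in traject g x (size l)].
Definition orbits_in (T : eqType) (l : seq T) (g : T -> T) : seq (seq T) :=
  undup [seq orbit_in l g x | x <- l].

(* The invariant f_{(Delta,R)} (relative to the chosen sigma, tau):
   number of Phi-orbits O with |O| = p and total length q, plus the number
   of Psi-orbits (p = 0, q = |O|). *)
Definition AGf (V A : finType) (s t : A -> V) (R : rel A) (sg tu : A -> bool)
    (p q : nat) : nat :=
  count (fun O => (size O == p) && (sumn (map (@glen V A) O) == q))
        (orbits_in (Nlist s t R sg tu) (Phi s t R sg tu))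
  + count (fun O => (p == 0) && (size O == q))
        (orbits_in (Clist s t R sg tu) (Psi s t R sg tu)).

Definition charpq (p q : nat) : nat -> nat -> nat :=
  fun a b => ((a == p) && (b == q) : nat).

(* Main.v *)
Require Import Defs.
From mathcomp Require Import all_boot all_fingroup.
From mathcomp Require Import finmap.
From mathcomp Require classical_sets cardinality.
From mathcomp Require Import zify.

Set Implicit Arguments.
Unset Strict Implicit.
Unset Printing Implicit Defensive.

Section Chain.
Variables (T : eqType) (f : T -> option T).
Local Notation F := (fun x y => f x == Some y).
Local Notation g := (obind f).

Lemma iter_None k : iter k g None = None.
Proof. by elim: k => //= k ->. Qed.

Lemma chain_unique a l l' : path F a l -> path F a l' ->
  f (last a l) = None -> f (last a l') = None -> l = l'.
Proof.
elim: l a l' => [|b l IH] a [|b' l'] //=.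
- by move=> _ /andP[/eqP ->].
- by move=> /andP[/eqP ->].
move=> /andP[/eqP E p] /andP[/eqP E' p'] n n'.
have bb : b' = b by move: E'; rewrite E => -[].
by subst b'; rewrite (IH b l' p p' n n').
Qed.

Lemma chain_traject a l : path F a l ->
  map Some (a :: l) = traject g (Some a) (size l).+1.
Proof.
elim: l a => [|b l IH] a //= /andP[/eqP E p].
by have := IH b p; rewrite /= => ->; rewrite E.
Qed.

Lemma chain_mem a l k x : path F a l -> f (last a l) = None ->
  iter k g (Some a) = Some x -> x \in a :: l.
Proof.
elim: l a k => [|b l IH] a [|k].
- by move=> _ _ [->]; rewrite mem_head.
- by move=> _ E; rewrite iterSr /= E iter_None.
- by move=> _ _ [->]; rewrite mem_head.
move=> /andP[/eqP E p] n; rewrite iterSr /= E => H.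
by rewrite in_cons (IH b k p n H) orbT.
Qed.

Lemma chain_suffix a l x : path F a l -> x \in a :: l ->
  exists l2, path F x l2 /\ last x l2 = last a l.
Proof.
elim: l a => [|b l IH] a /=.
  by move=> _; rewrite inE => /eqP ->; exists [::].
move=> /andP[E p]; rewrite in_cons => /orP[/eqP ->|xl].
  by exists (b :: l); rewrite /= E p.
exact: IH.
Qed.

Lemma chain_last a l : path F a l -> iter (size l) g (Some a) = Some (last a l).
Proof.
elim: l a => [|b l IH] a; first by [].
move=> /andP[/eqP E p]; rewrite [size (b :: l)]/= iterSr /= E; exact: IH.
Qed.

Lemma chain_uniq a l : path F a l -> f (last a l) = None -> uniq (a :: l).
Proof.
move=> p n; rewrite -(map_inj_uniq (@Some_inj _)) chain_traject //.
rewrite looping_uniq; apply/negP => /loopingP /(_ (size l).+1).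
rewrite iterS chain_last //= n => H.
have : None \in map Some (a :: l).
  by rewrite chain_traject // trajectSr mem_rcons in_cons H orbT.
by case/mapP.
Qed.

End Chain.

Section ChainFin.
Variables (T : finType) (f : T -> option T).
Hypothesis finj : forall x y z, f x = Some z -> f y = Some z -> x = y.
Local Notation F := (fun x y => f x == Some y).
Local Notation g := (obind f).

Lemma chain_desc a i j : (forall x, f x != Some a) -> i < j ->
  iter i g (Some a) = iter j g (Some a) -> iter j g (Some a) = None.
Proof.
move=> na; elim: i j => [|i IH] [|j] //; rewrite !iterS.
  case Ej: (iter j g (Some a)) => [c|] //= _ E.
  by move: (na c); rewrite -E eqxx.
rewrite ltnS => ij.
case Ei: (iter i g (Some a)) => [c|]; case Ej: (iter j g (Some a)) => [d|] //=.
case Efd: (f d) => [e|] // Efc.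
have cd := finj Efc Efd.
by have := IH _ ij; rewrite Ei Ej cd => /(_ erefl).
Qed.

Lemma chain_exists_k k a : iter k g (Some a) = None ->
  exists l, path F a l /\ f (last a l) = None.
Proof.
elim: k a => [|k IH] a //; rewrite iterSr /=.
case E: (f a) => [b|] H; last by exists [::].
have [l [p n]] := IH b H; exists (b :: l); by rewrite /= E eqxx p.
Qed.

Lemma chain_exists a : (forall x, f x != Some a) ->
  exists l, path F a l /\ f (last a l) = None.
Proof.
move=> na; pose N := #|{: option T}|.
have : ~~ uniq (traject g (Some a) N.+1).
  apply/negP => /card_uniqP; rewrite size_traject => H.
  by have := max_card (mem (traject g (Some a) N.+1)); rewrite H ltnn.
rewrite looping_uniq negbK => /trajectP [i iN Ei].
by apply: (@chain_exists_k N); apply: (chain_desc na iN); rewrite Ei.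
Qed.

End ChainFin.

Lemma mem_fset_set_inj (T : choiceType) (K : finType) (P : T -> bool) (key : T -> K) :
  {in P &, injective key} ->
  forall w, (w \in enum_fset (cardinality.fset_set (fun w => P w : Prop))) = P w.
Proof.
move=> kinj.
pose f w := if P w then Some (key w) else None.
have fin : cardinality.finite_set (fun w => P w : Prop).
  apply: (@cardinality.sub_finite_set _ _
     (classical_sets.preimage f (fun x => x != None : Prop))).
    by move=> w Pw; rewrite /classical_sets.preimage /f /= Pw.
  apply: cardinality.finite_preimage; last exact: cardinality.finite_finset.
  move=> w w'; rewrite !classical_sets.in_setE /classical_sets.preimage /f.
  rewrite /classical_sets.mkset /= => H1 H2.
  have {H1}H1 : P w by move: H1; case: (P w); rewrite ?eqxx.
  have {H2}H2 : P w' by move: H2; case: (P w'); rewrite ?eqxx.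
  rewrite H1 H2 => -[]; exact: kinj.
move=> w; have E := cardinality.in_fset_set fin w.
apply/idP/idP => H.
  have H' : w \in cardinality.fset_set (fun w => P w : Prop) by [].
  by rewrite E in H'; exact: (classical_sets.set_mem H').
have H' := @classical_sets.mem_set T (fun w => P w : Prop) w H.
by rewrite -E in H'.
Qed.

Section Main.
Variables (V A : finType) (s t : A -> V) (R : rel A) (sg tu : A -> bool).
Hypothesis Hg : gentle s t R.
Hypothesis Hsc : sign_convention s t R sg tu.

Lemma R_st a b : R a b -> s a = t b.
Proof. by case: Hg => _ [H _ _ _ _]; apply: H. Qed.

Lemma out_inj a b : s a = s b -> sg a = sg b -> a = b.
Proof.
case: Hsc => H1 _ _ e1 e2; apply/eqP; apply: contraTT (eqxx (sg a)) => ne.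
by rewrite {2}e2; apply: H1.
Qed.

Lemma in_inj a b : t a = t b -> tu a = tu b -> a = b.
Proof.
case: Hsc => _ H2 _ e1 e2; apply/eqP; apply: contraTT (eqxx (tu a)) => ne.
by rewrite {2}e2; apply: H2.
Qed.

Lemma RE a b : R a b = (s a == t b) && (sg a == tu b).
Proof.
case: Hsc => _ _ H3; apply/idP/andP => [r | [/eqP e1 /eqP e2]].
  have e := R_st r; split; apply/eqP => //; exact/(H3 _ _ e).
by apply/(H3 _ _ e1).
Qed.

Definition slot := (V * bool * bool)%type.

Definition outA (S : {set A}) (x : V) (e : bool) : option A :=
  [pick a in S | (s a == x) && (sg a == e)].
Definition inA (S : {set A}) (x : V) (e : bool) : option A :=
  [pick a in S | (t a == x) && (tu a == e)].

Lemma outA_some (S : {set A}) (a : A) : a \in S -> outA S (s a) (sg a) = Some a.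
Proof.
move=> aS; rewrite /outA; case: pickP => [b /and3P[bS /eqP e1 /eqP e2]|/(_ a)].
  by rewrite (out_inj e1 e2).
by rewrite aS !eqxx.
Qed.

Lemma outA_someE (S : {set A}) x e (a : A) : outA S x e = Some a -> [/\ a \in S, s a = x & sg a = e].
Proof.
rewrite /outA; case: pickP => // b /and3P[bS /eqP e1 /eqP e2] [<-]; by split.
Qed.

Lemma outA_none (S : {set A}) x e (a : A) : outA S x e = None -> a \in S -> s a = x -> sg a = e -> False.
Proof. by move=> H aS e1 e2; move: H; rewrite -e1 -e2 outA_some. Qed.

Lemma inA_some (S : {set A}) (a : A) : a \in S -> inA S (t a) (tu a) = Some a.
Proof.
move=> aS; rewrite /inA; case: pickP => [b /and3P[bS /eqP e1 /eqP e2]|/(_ a)].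
  by rewrite (in_inj e1 e2).
by rewrite aS !eqxx.
Qed.

Lemma inA_someE (S : {set A}) x e (a : A) : inA S x e = Some a -> [/\ a \in S, t a = x & tu a = e].
Proof.
rewrite /inA; case: pickP => // b /and3P[bS /eqP e1 /eqP e2] [<-]; by split.
Qed.

Lemma inA_none (S : {set A}) x e (a : A) : inA S x e = None -> a \in S -> t a = x -> tu a = e -> False.
Proof. by move=> H aS e1 e2; move: H; rewrite -e1 -e2 inA_some. Qed.

Definition iota (S : {set A}) (z : slot) : slot :=
  let: (x, io, e) := z in
  if io then (if outA S x e is Some a then (t a, false, tu a) else z)
  else (if inA S x e is Some b then (s b, true, sg b) else z).

Definition endf (z : slot) : slot :=
  let: (x, io, e) := z in if io then (x, false, e) else (x, true, ~~ e).

Lemma iotaK (S : {set A}) : involutive (iota S).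
Proof.
move=> [[x io] e]; case: io => /=.
  case E: (outA S x e) => [a|] /=; last by rewrite E.
  by case/outA_someE: E => aS <- <-; rewrite inA_some.
case E: (inA S x e) => [a|] /=; last by rewrite E.
by case/inA_someE: E => aS <- <-; rewrite outA_some.
Qed.

Lemma endf_inj : injective endf.
Proof.
move=> [[x io] e] [[x' io'] e'].
by case: io; case: io' => //= -[-> E]; rewrite ?E ?(negb_inj E).
Qed.

Lemma rhof_inj (S : {set A}) : injective (fun z => endf (iota S z)).
Proof. by move=> z z' /endf_inj /(can_inj (iotaK S)). Qed.

Definition rho (S : {set A}) : {perm slot} := perm (@rhof_inj S).

Lemma rhoE (S : {set A}) z : rho S z = endf (iota S z).
Proof. by rewrite permE. Qed.

Definition slotO (a : A) : slot := (s a, true, sg a).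
Definition slotI (a : A) : slot := (t a, false, tu a).

Lemma rho_add (S : {set A}) al : al \notin S ->
  rho (al |: S) = (tperm (slotO al) (slotI al) * rho S)%g.
Proof.
move=> alS; apply/permP => z; rewrite permM !rhoE; congr endf.
have iSO : iota S (slotI al) = slotI al.
  rewrite /= /slotI; case E: inA => [b|] //.
  by case/inA_someE: E => bS e1 e2; move: alS; rewrite -(in_inj e1 e2) bS.
have iSI : iota S (slotO al) = slotO al.
  rewrite /= /slotO; case E: outA => [b|] //.
  by case/outA_someE: E => bS e1 e2; move: alS; rewrite -(out_inj e1 e2) bS.
case: tpermP => [->|->|zO zI].
- by rewrite iSO /= outA_some // setU11.
- by rewrite iSI /= inA_some // setU11.
move: z zO zI => [[x io] e] zO zI; case: io zO zI => /= zO zI.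
  congr (if _ is Some a then _ else _); apply: eq_pick => a /=.
  rewrite in_setU1; have [->|//] := eqVneq a al.
  rewrite (negbTE alS) ?eqxx /=; apply/negbTE/negP => /andP[/eqP ex /eqP es].
  by case: zO; rewrite /slotO ex es.
congr (if _ is Some a then _ else _); apply: eq_pick => a /=.
rewrite in_setU1; have [->|//] := eqVneq a al.
rewrite (negbTE alS) ?eqxx /=; apply/negbTE/negP => /andP[/eqP ex /eqP es].
by case: zI; rewrite /slotI ex es.
Qed.


Definition vslots (v : V) : {set slot} := [set z : slot | z.1.1 == v].

Lemma rho_stay (S : {set A}) v z :
  (forall a, a \in S -> (s a != v) && (t a != v)) -> z.1.1 = v -> (rho S z).1.1 = v.
Proof.
move=> H; case: z => [[x io] e] /= ->; rewrite rhoE /=; case: io.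
  case E: outA => [a|] //; case/outA_someE: E => aS ex _.
  by move: (H _ aS); rewrite ex eqxx.
case E: inA => [a|] //; case/inA_someE: E => aS ex _.
by move: (H _ aS); rewrite ex eqxx andbF.
Qed.

Lemma porbit_stay (S : {set A}) z :
  (forall a, a \in S -> (s a != z.1.1) && (t a != z.1.1)) ->
  porbit (rho S) z \subset vslots z.1.1.
Proof.
move=> H; apply/subsetP => y /porbitP [i ->]; rewrite inE; apply/eqP.
elim: i => [|i IH]; first by rewrite expg0 perm1.
by rewrite expgSr permM; apply: rho_stay.
Qed.

Lemma rho0E z : rho set0 z = endf z.
Proof.
rewrite rhoE; case: z => [[x io] e] /=; case: io.
  by case E: outA => [a|] //; case/outA_someE: E; rewrite inE.
by case E: inA => [a|] //; case/inA_someE: E; rewrite inE.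
Qed.

Lemma porbit0 z : porbit (rho set0) z = vslots z.1.1.
Proof.
apply/eqP; rewrite eqEsubset porbit_stay ?andbT; last by move=> a; rewrite inE.
have step y : y \in porbit (rho set0) z -> endf y \in porbit (rho set0) z.
  move=> yz; rewrite -rho0E; move: yz; rewrite -!eq_porbit_mem => /eqP <-.
  by apply/eqP; rewrite -[rho set0 y]/((rho set0 ^+ 1)%g y) porbit_perm.
apply/subsetP => y; rewrite inE => /eqP.
have z0 := porbit_id (rho set0) z.
move: z z0 step y => [[x io] e] z0 step [[x' io'] e'] /= ->.
have z1 := step _ z0; have z2 := step _ z1; have z3 := step _ z2.
clear step; move: z0 z1 z2 z3; case: io; case: io'; case: e; case: e' => /= h0 h1 h2 h3; by [].
Qed.

Lemma card_porbits0 : #|porbits (rho set0)| = #|V|.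
Proof.
have -> : porbits (rho set0) = [set vslots v | v : V].
  apply/setP => X; apply/imsetP/imsetP => -[z _ ->].
    by exists z.1.1 => //; rewrite porbit0.
  by exists (z, true, true) => //; rewrite porbit0.
rewrite card_imset //= => u v E.
have : (u, true, true) \in vslots v by rewrite -E inE.
by rewrite inE => /eqP.
Qed.


Lemma cross (W : {set V}) x y : connect (adj s t) x y -> x \in W -> y \notin W ->
  exists u v, [/\ u \in W, v \notin W & adj s t u v].
Proof.
case/connectP => p pth ->; elim: p x pth => [|z p IH] x /=.
  by move=> _ ->.
case/andP => axz pth xW; have [zW|zW] := boolP (z \in W).
  by apply: IH.
by move=> _; exists x, z.
Qed.

Lemma bfs k : connected_quiver s t -> k < #|V| ->
  exists W : {set V}, exists S : {set A},
    [/\ #|W| = k.+1, #|S| = k, (forall a, a \in S -> (s a \in W) && (t a \in W))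
       & #|porbits (rho S)| + k = #|V|].
Proof.
case=> V0 Vc; elim: k => [_|k IH kV].
  case/card_gt0P: V0 => v0 _; exists [set v0], set0.
  split; [by rewrite cards1 | by rewrite cards0 | by move=> a; rewrite in_set0 | by rewrite addn0 card_porbits0].
have [W [S [cW cS WS cP]]] := IH (ltnW kV).
have [v0 v0W] : exists v0, v0 \notin W.
  apply/existsP; rewrite -negb_forall; apply/negP => /forallP H.
  have : #|[set: V]| <= #|W| by apply/subset_leq_card/subsetP => x _; exact: H.
  by rewrite cardsT cW leqNgt kV.
have [u0 u0W] : exists u0, u0 \in W by apply/card_gt0P; rewrite cW.
have [u [v [uW vW /existsP [al Hal]]]] := cross (Vc u0 v0) u0W v0W.
have alS : al \notin S.
  apply/negP => /WS /andP[sW tW].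
  by case/orP: Hal => /andP[/eqP e1 /eqP e2]; move: vW; rewrite -?e1 -?e2 ?sW ?tW.
have vS : forall a, a \in S -> (s a != v) && (t a != v).
  move=> a /WS /andP[sW tW]; apply/andP; split; apply/negP => /eqP e;
    by move: vW; rewrite -e ?sW ?tW.
have uv : u != v by apply/negP => /eqP e; move: vW; rewrite -e uW.
exists (v |: W), (al |: S); split.
- by rewrite cardsU1 vW cW.
- by rewrite cardsU1 alS cS.
- move=> a; rewrite in_setU1 => /orP[/eqP ->|/WS /andP[sW tW]]; last first.
    by rewrite !in_setU1 sW tW !orbT.
  by case/orP: Hal => /andP[/eqP -> /eqP ->]; rewrite !in_setU1 eqxx uW ?orbT.
have nin : slotO al \notin porbit (rho S) (slotI al).
  case/orP: Hal => /andP[/eqP e1 /eqP e2].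
    apply/negP => /(subsetP (porbit_stay _)) H.
    have : (slotO al) \in vslots (slotI al).1.1 by apply: H; rewrite /= e2.
    by rewrite inE /= e1 e2 (negbTE uv).
  rewrite porbit_sym; apply/negP => /(subsetP (porbit_stay _)) H.
  have : (slotI al) \in vslots (slotO al).1.1 by apply: H; rewrite /= e1.
  by rewrite inE /= e1 e2 (negbTE uv).
have := porbits_mul_tperm (rho S) (slotO al) (slotI al).
have ne : slotO al != slotI al by apply/eqP => /(congr1 (fun z => z.1.2)).
rewrite /= nin ne -rho_add //= => E.
rewrite -cP addnS -addSn; move: E => /=; rewrite !addnS ?addn0 ?addn1 => -[->] //.
Qed.

Lemma one_orbit : connected_quiver s t -> #|V| = #|A| + 1 ->
  #|porbits (rho [set: A])| = 1.
Proof.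
move=> Vc nm.
have kV : #|A| < #|V| by rewrite nm addn1.
have [W [S [cW cS WS cP]]] := bfs (k:=#|A|) Vc kV.
have -> : [set: A] = S.
  by apply/eqP; rewrite eq_sym eqEcard subsetT cardsT cS leqnn.
by move: cP; rewrite nm addnC => /addnI.
Qed.


Local Notation TT := [set: A].
Definition nxt a := inA TT (s a) (sg a).
Definition prv a := outA TT (t a) (tu a).
Definition pnxt a := inA TT (s a) (~~ sg a).
Definition pprv a := outA TT (t a) (~~ tu a).

Lemma inA_eq x e b : (inA TT x e == Some b) = (t b == x) && (tu b == e).
Proof.
apply/eqP/andP => [/inA_someE [_ -> ->] //|[/eqP <- /eqP <-]].
by rewrite inA_some ?in_setT.
Qed.

Lemma outA_eq x e b : (outA TT x e == Some b) = (s b == x) && (sg b == e).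
Proof.
apply/eqP/andP => [/outA_someE [_ -> ->] //|[/eqP <- /eqP <-]].
by rewrite outA_some ?in_setT.
Qed.

Lemma outA_noneE x e : (outA TT x e == None) = ~~ [exists a, (s a == x) && (sg a == e)].
Proof.
rewrite /outA; case: pickP => [a /andP[_ H]|H] /=.
  by apply/esym/negbF/existsP; exists a.
apply/esym/negP => /existsP [a Ha]; by move: (H a); rewrite in_setT Ha.
Qed.

Lemma inA_noneE x e : (inA TT x e == None) = ~~ [exists a, (t a == x) && (tu a == e)].
Proof.
rewrite /inA; case: pickP => [a /andP[_ H]|H] /=.
  by apply/esym/negbF/existsP; exists a.
apply/esym/negP => /existsP [a Ha]; by move: (H a); rewrite in_setT Ha.
Qed.

Lemma AstepE a b : ((s a == t b) && R a b) = (nxt a == Some b).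
Proof. by rewrite /nxt inA_eq RE andbA andbb eq_sym [tu b == _]eq_sym. Qed.

Lemma PstepE a b : ((s a == t b) && ~~ R a b) = (pnxt a == Some b).
Proof.
rewrite /pnxt inA_eq RE eq_sym; case: (t b == s a) => //=.
by case: (sg a); case: (tu b).
Qed.

Lemma nxt_prv a b : (nxt a == Some b) = (prv b == Some a).
Proof. by rewrite /nxt /prv inA_eq outA_eq eq_sym [tu b == _]eq_sym. Qed.

Lemma pnxt_pprv a b : (pnxt a == Some b) = (pprv b == Some a).
Proof.
rewrite /pnxt /pprv inA_eq outA_eq eq_sym; case: (s a == t b) => //=.
by case: (sg a); case: (tu b).
Qed.

Lemma nxt_inj x y z : nxt x = Some z -> nxt y = Some z -> x = y.
Proof.
by move=> /inA_someE [_ e1 e2] /inA_someE [_ e3 e4]; apply: out_inj; rewrite -?e1 -?e2.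
Qed.

Lemma prv_inj x y z : prv x = Some z -> prv y = Some z -> x = y.
Proof.
by move=> /outA_someE [_ e1 e2] /outA_someE [_ e3 e4]; apply: in_inj; rewrite -?e1 -?e2.
Qed.

Lemma pprv_inj x y z : pprv x = Some z -> pprv y = Some z -> x = y.
Proof.
move=> /outA_someE [_ e1 e2] /outA_someE [_ e3 e4]; apply: in_inj.
  by rewrite -e1 -e3.
by apply: negb_inj; rewrite -e2 -e4.
Qed.

Local Notation NA := (fun x y => nxt x == Some y).
Local Notation PA := (fun x y => pnxt x == Some y).

Lemma maxN_inr a l : max_antipath s t R sg tu (inr (a, l)) =
  [&& path NA a l, prv a == None & nxt (last a l) == None].
Proof.
by rewrite /max_antipath /= (eq_path AstepE) /prv /nxt outA_noneE inA_noneE.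
Qed.

Lemma maxN_inl x e1 e2 : max_antipath s t R sg tu (inl (x, e1, e2)) =
  [&& e2 == e1, outA TT x e2 == None & inA TT x e1 == None].
Proof. by rewrite /max_antipath /= outA_noneE inA_noneE. Qed.

Lemma maxM_inr a l : max_permitted s t R sg tu (inr (a, l)) =
  [&& path PA a l, pprv a == None & pnxt (last a l) == None].
Proof.
by rewrite /max_permitted /= (eq_path PstepE) /pprv /pnxt outA_noneE inA_noneE.
Qed.

Lemma maxM_inl x e1 e2 : max_permitted s t R sg tu (inl (x, e1, e2)) =
  [&& e2 == ~~ e1, outA TT x (~~ e2) == None & inA TT x (~~ e1) == None].
Proof. by rewrite /max_permitted /= outA_noneE inA_noneE. Qed.

Local Notation maxN := (max_antipath s t R sg tu).
Local Notation maxM := (max_permitted s t R sg tu).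

Lemma maxN_key_inj w w' : maxN w -> maxN w' ->
  (gt t w, gtu tu w) = (gt t w', gtu tu w') -> w = w'.
Proof.
case: w => [[[x e1] e2]|[a l]]; case: w' => [[[x' e1'] e2']|[a' l']] /=.
- rewrite !maxN_inl => /and3P[/eqP -> _ _] /and3P[/eqP -> _ _] [-> ->] //.
- rewrite maxN_inl => /and3P[/eqP -> _ H] _ [ex ee]; subst x e1.
  by rewrite inA_some ?in_setT in H.
- rewrite maxN_inl => _ /and3P[/eqP -> _ H] [ex ee]; subst x' e1'.
  by rewrite inA_some ?in_setT in H.
rewrite !maxN_inr => /and3P[p _ /eqP n] /and3P[p' _ /eqP n'] [e1 e2].
have aa := in_inj e1 e2; subst a'.
by rewrite (chain_unique p p' n n').
Qed.

Lemma maxM_key_inj w w' : maxM w -> maxM w' ->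
  (gt t w, gtu tu w) = (gt t w', gtu tu w') -> w = w'.
Proof.
case: w => [[[x e1] e2]|[a l]]; case: w' => [[[x' e1'] e2']|[a' l']] /=.
- rewrite !maxM_inl => /and3P[/eqP -> _ _] /and3P[/eqP -> _ _] [-> E].
  by rewrite (negb_inj E).
- rewrite maxM_inl => /and3P[/eqP -> _ H] _ [ex ee]; subst x.
  by rewrite ee inA_some ?in_setT in H.
- rewrite maxM_inl => _ /and3P[/eqP -> _ H] [ex ee]; subst x'.
  by rewrite -ee inA_some ?in_setT in H.
rewrite !maxM_inr => /and3P[p _ /eqP n] /and3P[p' _ /eqP n'] [e1 e2].
have aa := in_inj e1 e2; subst a'.
by rewrite (chain_unique p p' n n').
Qed.

Lemma memN w : (w \in Nlist s t R sg tu) = maxN w.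
Proof.
apply: (mem_fset_set_inj (key := fun w => (gt t w, gtu tu w))).
move=> w1 w2 H1 H2; exact: maxN_key_inj.
Qed.

Lemma memM w : (w \in Mlist s t R sg tu) = maxM w.
Proof.
apply: (mem_fset_set_inj (key := fun w => (gt t w, gtu tu w))).
move=> w1 w2 H1 H2; exact: maxM_key_inj.
Qed.

Lemma maxN_src w : maxN w -> inA TT (gs s w) (gsg sg w) = None.
Proof.
case: w => [[[x e1] e2]|[a l]]; first by rewrite maxN_inl => /and3P[_ _ /eqP].
by rewrite maxN_inr => /and3P[_ _ /eqP].
Qed.

Lemma maxN_tgt w : maxN w -> outA TT (gt t w) (gtu tu w) = None.
Proof.
case: w => [[[x e1] e2]|[a l]]; first by rewrite maxN_inl => /and3P[_ /eqP ? _].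
by rewrite maxN_inr => /and3P[_ /eqP ? _].
Qed.

Lemma maxM_tgt w : maxM w -> outA TT (gt t w) (~~ gtu tu w) = None.
Proof.
case: w => [[[x e1] e2]|[a l]]; first by rewrite maxM_inl => /and3P[_ /eqP ? _].
by rewrite maxM_inr => /and3P[_ /eqP ? _].
Qed.

Lemma existsN_tgt y f : outA TT y f = None ->
  exists w, maxN w /\ (gt t w, gtu tu w) = (y, f).
Proof.
move=> Hout; case E: (inA TT y f) => [b|]; last first.
  by exists (inl (y, f, f)); rewrite maxN_inl eqxx Hout E.
case/inA_someE: E => _ ey ef.
have na : forall x, nxt x != Some b.
  by move=> x; rewrite nxt_prv /prv ey ef Hout.
have [l [p n]] := chain_exists nxt_inj na.
by exists (inr (b, l)); rewrite maxN_inr p /prv ey ef Hout n /= ey ef.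
Qed.

Lemma last_rev_belast (T : Type) (x : T) p : last (last x p) (rev (belast x p)) = x.
Proof.
have H : last x p :: rev (belast x p) = rev (x :: p) by rewrite [x :: p]lastI rev_rcons.
by rewrite -(last_cons x) H rev_cons last_rcons.
Qed.

Lemma existsM_src x f : inA TT x (~~ f) = None ->
  exists w, maxM w /\ (gs s w, gsg sg w) = (x, f).
Proof.
move=> Hin; case E: (outA TT x f) => [an|]; last first.
  by exists (inl (x, f, ~~ f)); rewrite maxM_inl eqxx negbK E Hin.
case/outA_someE: E => _ ex ef.
have na : forall y, pprv y != Some an.
  by move=> y; rewrite -pnxt_pprv /pnxt ex ef Hin.
have [l [p n]] := chain_exists pprv_inj na.
exists (inr (last an l, rev (belast an l))); rewrite maxM_inr /= last_rev_belast.
rewrite n [pnxt an]/pnxt ex ef Hin !eqxx andbT; split => //.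
rewrite rev_path andbT; move: p; apply: sub_path => u v /=; by rewrite pnxt_pprv.
Qed.

Lemma head_filter (T : eqType) (P : pred T) (l : seq T) d :
  has P l -> P (head d (filter P l)) && (head d (filter P l) \in l).
Proof.
rewrite has_filter; case E: (filter P l) => [|h r] //= _.
have : h \in filter P l by rewrite E mem_head.
by rewrite mem_filter.
Qed.

Lemma psiP w : maxN w -> [/\ maxM (psi s t R sg tu w),
  gs s (psi s t R sg tu w) = gs s w & gsg sg (psi s t R sg tu w) = ~~ gsg sg w].
Proof.
move=> Nw.
have H0 : inA TT (gs s w) (~~ ~~ gsg sg w) = None by rewrite negbK maxN_src.
have [o [Mo [e1 e2]]] := existsM_src H0.
have : has (fun w' => (gs s w' == gs s w) && (gsg sg w' == ~~ gsg sg w))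
           (Mlist s t R sg tu).
  by apply/hasP; exists o; rewrite ?memM ?e1 ?e2 ?eqxx.
move/(head_filter w); rewrite /psi => /andP[/andP[/eqP -> /eqP ->]].
by rewrite memM.
Qed.

Lemma phiP o : maxM o -> [/\ maxN (phi s t R sg tu o),
  gt t (phi s t R sg tu o) = gt t o & gtu tu (phi s t R sg tu o) = ~~ gtu tu o].
Proof.
move=> Mo; have [w [Nw [e1 e2]]] := existsN_tgt (maxM_tgt Mo).
have : has (fun w' => (gt t w' == gt t o) && (gtu tu w' == ~~ gtu tu o))
           (Nlist s t R sg tu).
  by apply/hasP; exists w; rewrite ?memN ?e1 ?e2 ?eqxx.
move/(head_filter o); rewrite /phi => /andP[/andP[/eqP -> /eqP ->]].
by rewrite memN.
Qed.

Lemma PhiN w : maxN w -> maxN (Phi s t R sg tu w).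
Proof. by move=> /psiP [Mo _ _]; have [] := phiP Mo. Qed.

Local Notation rT := (rho TT).

Lemma rhoO x e : rT (x, true, e) =
  if outA TT x e is Some a then (t a, true, ~~ tu a) else (x, false, e).
Proof. by rewrite rhoE /=; case: outA. Qed.

Lemma rhoI x e : rT (x, false, e) =
  if inA TT x e is Some b then (s b, false, sg b) else (x, true, ~~ e).
Proof. by rewrite rhoE /=; case: inA. Qed.

Lemma rho_sO c : rT (s c, true, sg c) = (t c, true, ~~ tu c).
Proof. by rewrite rhoO outA_some ?in_setT. Qed.

Lemma rho_tI c : rT (t c, false, tu c) = (s c, false, sg c).
Proof. by rewrite rhoI inA_some ?in_setT. Qed.

Lemma walkQ b l : path NA b l ->
  (forall j, j <= size l -> exists c, iter j rT (s b, false, sg b) = (s c, false, sg c)) /\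
  iter (size l) rT (s b, false, sg b) = (s (last b l), false, sg (last b l)).
Proof.
elim: l b => [|b' l IH] b.
  by move=> _; split => // -[|j] // _; exists b.
move=> H; have /andP[/eqP E p] : (nxt b == Some b') && path NA b' l := H.
have [IH1 IH2] := IH b' p.
have R1 : rT (s b, false, sg b) = (s b', false, sg b') by rewrite rhoI -/(nxt b) E.
split; last by rewrite iterSr R1.
by move=> [|j] Hj; [exists b | rewrite iterSr R1; apply: IH1].
Qed.

Lemma walkP a l : path PA a l ->
  (forall j, j <= (size l).+1 ->
     (iter j rT (s (last a l), true, sg (last a l))).1.2 = true) /\
  iter (size l).+1 rT (s (last a l), true, sg (last a l)) = (t a, true, ~~ tu a).
Proof.
elim: l a => [|b l IH] a.
  move=> _; rewrite /= rho_sO; split => // -[|[|j]] //= _; by rewrite rho_sO.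
move=> H; have /andP[E p] : (pnxt a == Some b) && path PA b l := H.
have [IH1 IH2] := IH b p.
move: E; rewrite pnxt_pprv => /eqP /outA_someE [_ e1 e2].
have R1 : iter (size l).+2 rT (s (last b l), true, sg (last b l)) = (t a, true, ~~ tu a).
  by rewrite iterS IH2 -e1 -e2 rho_sO.
split => // j Hj; have [Hj'|Hj'] := leqP j (size l).+1; first exact: IH1.
have -> : j = (size l).+2 by apply/eqP; rewrite eqn_leq Hj Hj'.
by change (last a (b :: l)) with (last b l); rewrite R1.
Qed.

Definition zT (w : gpath V A) : slot := (gt t w, false, gtu tu w).
Definition zI (w : gpath V A) : slot := (gs s w, false, gsg sg w).
Definition isET (z : slot) := (~~ z.1.2) && (outA TT z.1.1 z.2 == None).

Lemma walkN w : maxN w ->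
  (forall j, 0 < j <= glen w -> ~~ isET (iter j rT (zT w))) /\
  iter (glen w) rT (zT w) = zI w.
Proof.
case: w => [[[x e1] e2]|[b l]].
  by rewrite maxN_inl /zT /zI /= => /and3P[/eqP -> _ _]; split => // -[].
rewrite maxN_inr => /and3P[p _ _]; have [W1 W2] := walkQ p.
rewrite /zT /zI; change (glen (inr (b, l))) with (size l).+1.
change (gt t (inr (b,l))) with (t b); change (gtu tu (inr (b,l))) with (tu b).
change (gs s (inr (b,l))) with (s (last b l)).
change (gsg sg (inr (b,l))) with (sg (last b l)).
split; last by rewrite iterSr rho_tI.
move=> [|j] // /andP[_ Hj]; rewrite iterSr rho_tI.
have [c ->] := W1 j Hj.
by rewrite /isET /= outA_some ?in_setT.
Qed.

Lemma walkM o : maxM o ->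
  (forall j, j <= glen o -> (iter j rT (gs s o, true, gsg sg o)).1.2 = true) /\
  iter (glen o).+1 rT (gs s o, true, gsg sg o) = (gt t o, false, ~~ gtu tu o).
Proof.
case: o => [[[x e1] e2]|[a l]].
  rewrite maxM_inl /= => /and3P[/eqP -> /eqP H _]; split; first by case.
  by rewrite rhoO; move: H; rewrite !negbK => ->.
rewrite maxM_inr => /and3P[p /eqP n _]; have [W1 W2] := walkP p.
change (glen (inr (a,l))) with (size l).+1.
change (gs s (inr (a,l))) with (s (last a l)).
change (gsg sg (inr (a,l))) with (sg (last a l)).
change (gt t (inr (a,l))) with (t a); change (gtu tu (inr (a,l))) with (tu a).
split => //; rewrite iterS W2 rhoO; by rewrite -/(pprv a) n.
Qed.

Lemma Phi_step w : maxN w -> exists k, [/\ 0 < k,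
  iter k rT (zT w) = zT (Phi s t R sg tu w) &
  forall j, 0 < j < k -> ~~ isET (iter j rT (zT w))].
Proof.
move=> Nw; have [W1 W2] := walkN Nw.
have [Mo e1 e2] := psiP Nw.
set o := psi s t R sg tu w in Mo e1 e2.
have [V1 V2] := walkM Mo.
have [_ f1 f2] := phiP Mo.
have R1 : rT (zI w) = (gs s o, true, gsg sg o).
  by rewrite /zI rhoI maxN_src // e1 e2.
exists ((glen o).+2 + glen w); split => //.
  by rewrite iterD W2 iterSr R1 V2 /zT /Phi f1 f2.
move=> j /andP[j0 jk]; have [jw|jw] := leqP j (glen w).
  by apply: W1; rewrite j0 jw.
rewrite -(subnK (ltnW jw)) iterD W2.
have : 0 < j - glen w by rewrite subn_gt0.
case E: (j - glen w) => [|i] // _; rewrite iterSr R1.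
rewrite /isET V1 //.
by move: jk; rewrite -(subnK (ltnW jw)) E ltn_add2r ltnS.
Qed.

Local Notation PhiT := (Phi s t R sg tu).
Local Notation NL := (Nlist s t R sg tu).

Lemma perm_iter (p : {perm slot}) j z : (p ^+ j)%g z = iter j p z.
Proof. by elim: j => [|j IH]; [rewrite expg0 perm1 | rewrite expgSr permM IH]. Qed.

Lemma zT_inj w w' : maxN w -> maxN w' -> zT w = zT w' -> w = w'.
Proof. by move=> Nw Nw' [e1 e2]; apply: maxN_key_inj => //; rewrite e1 e2. Qed.

Lemma maxN_ET w : maxN w -> isET (zT w).
Proof. by move=> Nw; rewrite /isET /zT /= maxN_tgt. Qed.

Lemma Phi_reach n : forall j w w', j <= n -> maxN w -> maxN w' ->
  iter j rT (zT w) = zT w' -> exists i, w' = iter i PhiT w.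
Proof.
elim: n => [|n IH] [|j] w w' // jn Nw Nw' E.
- by exists 0; apply: zT_inj.
- by exists 0; apply: zT_inj.
have [k [k0 Ek Hk]] := Phi_step Nw.
have [jk|jk] := ltnP j.+1 k.
  by move: (Hk j.+1 (jk : 0 < j.+1 < k)); rewrite E maxN_ET.
move: E; rewrite -(subnK jk) iterD Ek => E.
have [|i ->] := IH (j.+1 - k) (PhiT w) w' _ (PhiN Nw) Nw' E.
  by rewrite leq_subLR (leq_trans jn) // -add1n leq_add2r.
by exists i.+1; rewrite iterSr.
Qed.

Lemma Phi_trans : (forall z z', z' \in porbit rT z) ->
  forall w w', maxN w -> maxN w' -> exists i, w' = iter i PhiT w.
Proof.
move=> H w w' Nw Nw'; have /porbitP [j Ej] := H (zT w) (zT w').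
by apply: (@Phi_reach j j) => //; rewrite -perm_iter.
Qed.

Lemma traject_all (T : eqType) (f : T -> T) (l : seq T) x :
  {in l, forall y, f y \in l} -> x \in l -> forall i, iter i f x \in traject f x (size l).
Proof.
move=> fl xl.
have all_in i : iter i f x \in l by elim: i => // i IH; rewrite iterS fl.
case Hl: (size l) => [|n]; first by move/eqP: Hl; rewrite size_eq0 => /eqP Hl; rewrite Hl in xl.
have [U|NU] := boolP (uniq (traject f x n.+1)).
  have sub : {subset traject f x n.+1 <= l}.
    by move=> y /trajectP [i _ ->].
  have sz : size l <= size (traject f x n.+1) by rewrite size_traject Hl.
  have [_ eqs] := uniq_min_size U sub sz.
  apply/loopingP; rewrite /looping eqs; exact: all_in.
move: NU; rewrite looping_uniq negbK => /loopingP L i.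
by rewrite trajectSr mem_rcons in_cons L orbT.
Qed.

Lemma orbit_full : (forall z z', z' \in porbit rT z) ->
  forall w, w \in NL -> orbit_in NL PhiT w = NL.
Proof.
move=> H w wN; apply/all_filterP/allP => y yN.
have Nw : maxN w by rewrite -memN.
have Ny : maxN y by rewrite -memN.
have [i ->] := Phi_trans H Nw Ny.
apply: traject_all => // u; rewrite !memN; exact: PhiN.
Qed.

Lemma undup_const (T : eqType) (T' : Type) (c : T) (l : seq T') :
  0 < size l -> undup [seq c | _ <- l] = [:: c].
Proof.
elim: l => [|x l IH] //= _; case: l IH => [|y l] //= IH.
by rewrite inE eqxx /= IH.
Qed.

Lemma back_term k al : iter k (obind prv) (Some al) = None ->
  exists a1 j, prv a1 = None /\ iter j (obind nxt) (Some a1) = Some al.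
Proof.
elim: k al => [|k IH] al //; rewrite iterSr /=.
case E: (prv al) => [b|] H; last by exists al, 0.
have [a1 [j [n Ej]]] := IH b H; exists a1, j.+1; split => //.
rewrite iterS Ej /=; apply/eqP; by rewrite nxt_prv E.
Qed.

Lemma inC_loop al : inC s t R sg tu al -> forall k, iter k (obind prv) (Some al) != None.
Proof.
move=> C k; apply/negP => /eqP /back_term [a1 [j [n Ej]]].
have na : forall x, nxt x != Some a1 by move=> x; rewrite nxt_prv n.
have [l [p nl]] := chain_exists nxt_inj na.
have wN : inr (a1, l) \in NL by rewrite memN maxN_inr p n nl !eqxx.
move: C; rewrite /inC => /hasPn /(_ _ wN) /=.
by rewrite (chain_mem p nl Ej).
Qed.

Lemma loop_desc d i x : (forall k, iter k (obind prv) (Some x) != None) ->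
  iter (i + d) (obind prv) (Some x) = iter i (obind prv) (Some x) ->
  iter d (obind prv) (Some x) = Some x.
Proof.
move=> nn; elim: i => [|i IH] //.
rewrite addSn !iterS.
case Ea: (iter (i + d) (obind prv) (Some x)) => [c|]; last by move: (nn (i + d)); rewrite Ea.
case Eb: (iter i (obind prv) (Some x)) => [c'|]; last by move: (nn i); rewrite Eb.
move=> /= E; apply: IH; rewrite Ea Eb; congr Some.
case Ec: (prv c) => [e|]; last by move: (nn (i + d).+1); rewrite iterS Ea /= Ec.
by rewrite Ec in E; apply: (prv_inj Ec).
Qed.

Lemma loop_next b : (forall k, iter k (obind prv) (Some b) != None) ->
  exists c, nxt b = Some c /\ forall k, iter k (obind prv) (Some c) != None.
Proof.
move=> nn; pose N := #|{: option A}|.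
have : ~~ uniq (traject (obind prv) (Some b) N.+1).
  apply/negP => /card_uniqP; rewrite size_traject => H.
  by have := max_card (mem (traject (obind prv) (Some b) N.+1)); rewrite H ltnn.
rewrite looping_uniq negbK => /trajectP [i iN Ei].
have Ed := @loop_desc (N - i) i b nn; rewrite subnKC ?(ltnW iN) // in Ed.
have := Ed Ei; case E: (N - i) => [|d]; first by move: iN; rewrite -subn_gt0 E.
rewrite iterS; case Ec: (iter d (obind prv) (Some b)) => [c|]; last first.
  by move: (nn d); rewrite Ec.
move=> /= Pc; exists c; split; first by apply/eqP; rewrite nxt_prv Pc.
by move=> k; rewrite -Ec -iterD; apply: nn.
Qed.

Lemma C_empty : (forall z z', z' \in porbit rT z) -> Clist s t R sg tu = [::].
Proof.
move=> H; case E: (Clist s t R sg tu) => [|al r] //.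
have : al \in Clist s t R sg tu by rewrite E mem_head.
rewrite mem_filter => /andP[C _].
pose P z := exists b, (forall k, iter k (obind prv) (Some b) != None) /\ z = (s b, false, sg b).
have Pst z : P z -> P (rT z).
  move=> [b [nb ->]]; have [c [nc Hc]] := loop_next nb.
  by exists c; split => //; rewrite rhoI -/(nxt b) nc.
have Pit i : P (iter i rT (s al, false, sg al)).
  elim: i => [|i IH]; last by rewrite iterS; apply: Pst.
  by exists al; split => //; apply: inC_loop.
have /porbitP [i Ei] := H (s al, false, sg al) (s al, true, sg al).
by have [b [_ []]] := Pit i; rewrite -perm_iter -Ei.
Qed.

Lemma garrows_uniq w : maxN w -> uniq (garrows w).
Proof.
case: w => [[[x e1] e2]|[a l]] //; rewrite maxN_inr => /and3P[p _ /eqP n].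
exact: chain_uniq p n.
Qed.

Lemma garrows_disj w w' al : maxN w -> maxN w' ->
  al \in garrows w -> al \in garrows w' -> w = w'.
Proof.
case: w => [[[x e1] e2]|[a l]] //; case: w' => [[[x' e1'] e2']|[a' l']] //.
rewrite !maxN_inr => /and3P[p /eqP pa /eqP n] /and3P[p' /eqP pa' /eqP n'] /= H H'.
have [l2 [p2 e2]] := chain_suffix p H.
have [l2' [p2' e2']] := chain_suffix p' H'.
have ll : last a l = last a' l'.
  rewrite -e2 -e2'; congr last; apply: chain_unique p2 p2' _ _; by rewrite ?e2 ?e2'.
have bk (b : A) r : path NA b r -> path (fun x y => prv x == Some y) (last b r) (rev (belast b r)).
  move=> q; rewrite rev_path; move: q; apply: sub_path => u v /=; by rewrite nxt_prv.
have q := bk _ _ p; have q' := bk _ _ p'.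
rewrite ll in q.
have pa2 : prv (last (last a' l') (rev (belast a l))) = None by rewrite -ll last_rev_belast.
have pa2' : prv (last (last a' l') (rev (belast a' l'))) = None by rewrite last_rev_belast.
have /(inv_inj (@revK _)) bb := chain_unique q q' pa2 pa2'.
have : a :: l = a' :: l' by rewrite [a :: l]lastI bb ll -lastI.
by case => -> ->.
Qed.


Lemma NL_uniq : uniq NL.
Proof. exact: fset_uniq. Qed.

Lemma flatten_uniqN ws : uniq ws -> {in ws, forall w, maxN w} ->
  uniq (flatten (map (@garrows V A) ws)).
Proof.
elim: ws => [|w ws IH] //= /andP[wn U] Hm.
have Hm' : {in ws, forall w, maxN w}.
  by move=> u uw; apply: Hm; rewrite in_cons uw orbT.
rewrite cat_uniq (IH U Hm') andbT garrows_uniq ?Hm ?mem_head //=.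
apply/hasPn => al /flattenP [r /mapP [w' w'ws ->]] H1; apply/negP => H2.
have ww := garrows_disj (Hm _ (mem_head _ _)) (Hm' _ w'ws) H2 H1.
by move: wn; rewrite ww w'ws.
Qed.

Lemma sum_glen : Clist s t R sg tu = [::] -> sumn (map (@glen V A) NL) = #|A|.
Proof.
move=> C0.
have gE : map (@glen V A) NL = shape (map (@garrows V A) NL).
  by rewrite /shape -map_comp; apply: eq_map => -[[[x e1] e2]|[a l]].
rewrite gE -size_flatten.
have U := flatten_uniqN NL_uniq (fun w wN => (etrans (esym (memN w)) wN)).
rewrite -(card_uniqP U); apply: eq_card => al.
have : ~~ inC s t R sg tu al.
  apply/negP => C; have : al \in Clist s t R sg tu by rewrite mem_filter C mem_enum.
  by rewrite C0.
rewrite /inC negbK => /hasP [w wN H].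
by rewrite inE; apply/flattenP; exists (garrows w) => //; apply: map_f.
Qed.

Lemma size_N : size NL + #|A| = 2 * #|V|.
Proof.
pose key (w : gpath V A) := (gt t w, gtu tu w).
pose EO := [pred k : V * bool | outA TT k.1 k.2 == None].
have U : uniq (map key NL).
  rewrite map_inj_in_uniq ?NL_uniq // => w w' wN w'N.
  by apply: maxN_key_inj; rewrite -memN.
have E1 : size NL = #|EO|.
  rewrite -(size_map key) -(card_uniqP U); apply: eq_card => k.
  rewrite inE; apply/mapP/eqP => [[w wN ->]|H].
    by apply: maxN_tgt; rewrite -memN.
  have [w [Nw kw]] := existsN_tgt H.
  by exists w; rewrite ?memN // /key kw; case: k {H kw}.
have fi : injective (fun a => (s a, sg a)).
  by move=> a b [e1 e2]; apply: out_inj.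
have E2 : #|[predC EO]| = #|A|.
  rewrite -(card_codom fi); apply: eq_card => k; rewrite !inE.
  apply/idP/codomP => [H|[a ->]]; last by rewrite /= outA_some ?in_setT.
  case E: (outA TT k.1 k.2) H => [a|] // _.
  by case/outA_someE: E => _ ex ee; exists a; rewrite ex ee; case: k {ex ee}.
by rewrite E1 -E2 cardC card_prod card_bool mulnC.
Qed.

Lemma final_main : #|V| = #|A| + 1 <->
  exists p : nat, AGf s t R sg tu =2 charpq p.+2 p.
Proof.
have sN := size_N.
split.
  move=> nm.
  have Vc : connected_quiver s t by case: Hg.
  have one := one_orbit Vc nm.
  have all1 : forall z z', z' \in porbit rT z.
    move=> z z'; have /cards1P [X HX] : #|porbits rT| == 1 by rewrite one.
    have h z0 : porbit rT z0 = X.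
      by apply/set1P; rewrite -HX; apply: imset_f.
    by rewrite (h z) -(h z') porbit_id.
  have C0 := C_empty all1.
  have sg0 := sum_glen C0.
  have szN : size NL = #|A|.+2 by move: sN; rewrite nm; lia.
  have orbE : orbits_in NL (Phi s t R sg tu) = [:: NL].
    have EM : [seq orbit_in NL (Phi s t R sg tu) x | x <- NL] = [seq NL | _ <- NL].
      by apply/eq_in_map => w wN; apply: orbit_full.
    rewrite /orbits_in EM.
    by rewrite undup_const // szN.
  exists #|A| => p q; rewrite /AGf orbE C0 /= sg0 szN /charpq addn0 addn0.
  by rewrite [p == _]eq_sym [q == _]eq_sym.
move=> [p0 H].
have C0 : Clist s t R sg tu = [::].
  case E: (Clist s t R sg tu) => [|al r] //.
  pose O := orbit_in (Clist s t R sg tu) (Psi s t R sg tu) al.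
  have Oin : O \in orbits_in (Clist s t R sg tu) (Psi s t R sg tu).
    by rewrite mem_undup; apply: map_f; rewrite E mem_head.
  move: (H 0 (size O)); rewrite /AGf /charpq /= => /eqP; rewrite addn_eq0 => /andP[_ /eqP c2].
  have : has (fun O0 => (0 == 0) && (size O0 == size O))
    (orbits_in (Clist s t R sg tu) (Psi s t R sg tu)).
    by apply/hasP; exists O; rewrite ?eqxx.
  by rewrite has_count c2.
have sg0 := sum_glen C0.
set P := fun O : seq (gpath V A) => (size O == p0.+2) && (sumn (map (@glen V A) O) == p0).
have H1 : count P (orbits_in NL (Phi s t R sg tu)) = 1.
  by move: (H p0.+2 p0); rewrite /AGf C0 /charpq /= !eqxx addn0.
have Hall : all P (orbits_in NL (Phi s t R sg tu)).
  apply/allP => O; rewrite mem_undup => /mapP [w wN ->].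
  have : 0 < AGf s t R sg tu (size (orbit_in NL (Phi s t R sg tu) w))
                (sumn (map (@glen V A) (orbit_in NL (Phi s t R sg tu) w))).
    rewrite /AGf; apply: leq_trans (leq_addr _ _); rewrite -has_count.
    apply/hasP; exists (orbit_in NL (Phi s t R sg tu) w); rewrite ?eqxx //.
    by rewrite mem_undup; apply: map_f.
  by rewrite H /charpq /P; case: (_ && _).
move: (Hall); rewrite all_count H1 eq_sym; case E: (orbits_in _ _) => [|O [|]] //= _.
have NLne : 0 < size NL.
  case E2: NL => [|w0 r] //; move: E; rewrite /orbits_in E2 //.
have wO : forall w, w \in NL -> w \in O.
  move=> w wN.
  have : orbit_in NL (Phi s t R sg tu) w \in orbits_in NL (Phi s t R sg tu).
    by rewrite mem_undup; apply: map_f.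
  rewrite E inE => /eqP <-.
  rewrite mem_filter wN andbT; case: (size NL) NLne => // n _.
  by rewrite mem_head.
have OE : O = NL.
  have [w0 w0N] : exists w0, w0 \in NL by case: NL NLne => // w0 r _; exists w0; rewrite mem_head.
  have : orbit_in NL (Phi s t R sg tu) w0 \in orbits_in NL (Phi s t R sg tu).
    by rewrite mem_undup; apply: map_f.
  rewrite E inE => /eqP <-; apply/all_filterP/allP => y yN.
  have := wO y yN; rewrite -{1}(_ : orbit_in NL (Phi s t R sg tu) w0 = O).
    by rewrite mem_filter => /andP[].
  have : orbit_in NL (Phi s t R sg tu) w0 \in orbits_in NL (Phi s t R sg tu).
    by rewrite mem_undup; apply: map_f.
  by rewrite E inE => /eqP.
move: (Hall); rewrite E /= andbT /P OE sg0 => /andP[/eqP szN /eqP pA].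
move: sN; rewrite szN -pA; move: (#|A|) (#|V|) => a v; lia.
Qed.

End Main.

Theorem proposition3p4 (V A : finType) (s t : A -> V) (R : rel A)
    (sg tu : A -> bool) :
  gentle s t R -> sign_convention s t R sg tu ->
  (#|V| = #|A| + 1 <->
   exists p : nat, AGf s t R sg tu =2 charpq p.+2 p).
Proof. by move=> Hg Hsc; apply: final_main. Qed.
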